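(* Let $\alpha$ be an ordinal and let $\mathcal{X},\mathcal{Y}$ be families of metric spaces. If $F\colon\mathcal{X}\to\mathcal{Y}$ is a coarse embedding and $\mathcal{Y}\in\mathfrak{C}_\alpha$, then $\mathcal{X}\in\mathfrak{C}_\alpha$.
   Context: A family $\mathcal{U}$ of metric subspaces of a metric space $(X,d)$ is $r$-disjoint if $d(x,y)>r$ whenever $x\in U$, $y\in U'$, $U\neq U'$ in $\mathcal{U}$. For families $\mathcal{X},\mathcal{Y}$ and $R\in\mathbb{R}^{\mathbb{N}}$, $\mathcal{X}\xrightarrow{R}\mathcal{Y}$ means: there is an integer $k$ such that for each $X\in\mathcal{X}$ there are subcollections $\mathcal{U}_1,\dots,\mathcal{U}_k\subseteq\mathcal{Y}$ of subspaces of $X$, each $\mathcal{U}_i$ being $R_i$-disjoint, with $\bigcup_i\mathcal{U}_i$ covering $X$. A family is bounded if the diameters of its members are uniformly bounded. $\mathfrak{C}_0$ is the class of bounded families; for an ordinal $\alpha>0$, $\mathfrak{C}_\alpha$ is the class of families $\mathcal{X}$ such that for every $R\in\mathbb{R}^{\mathbb{N}}$ there exist $\beta<\alpha$ and $\mathcal{Y}\in\mathfrak{C}_\beta$ with $\mathcal{X}\xrightarrow{R}\mathcal{Y}$. A map $F\colon\mathcal{X}\to\mathcal{Y}$ of families is a collection of maps $f\colon X_f\to Y_f$ with $\{X_f\}_{f\in F}=\mathcal{X}$ and $Y_f\in\mathcal{Y}$. It is a coarse embedding if there are non-decreasing $\rho_1,\rho_2\colon[0,\infty)\to[0,\infty)$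 with $\rho_1$ proper such that $\rho_1(d(x,x'))\le d(f(x),f(x'))\le\rho_2(d(x,x'))$ for all $f\in F$ and $x,x'\in X_f$. *)

(* Defs.v *)
From Stdlib Require Import Reals.
Open Scope R_scope.

(* A metric space whose carrier is a subset [pts] of an ambient type T,
   with distance function [dist] (only its values on [pts] matter). *)
Record MS (T : Type) := mkMS { pts : T -> Prop ; dist : T -> T -> R }.
Arguments mkMS {T}.
Arguments pts {T}.
Arguments dist {T}.

Definition is_metric {T} (X : MS T) : Prop :=
  (forall x y, pts X x -> pts X y -> 0 <= dist X x y) /\
  (forall x y, pts X x -> pts X y -> (dist X x y = 0 <-> x = y)) /\
  (forall x y, pts X x -> pts X y -> dist X x y = dist X y x) /\
  (forall x y z, pts X x -> pts X y -> pts X z ->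
     dist X x z <= dist X x y + dist X y z).

Definition mfamily (T : Type) := MS T -> Prop.

Definition metric_family {T} (FX : mfamily T) : Prop :=
  forall X, FX X -> is_metric X.

Definition subspace {T} (Y X : MS T) : Prop :=
  dist Y = dist X /\ (forall x, pts Y x -> pts X x).

Definition rdisjoint {T} (r : R) (U : mfamily T) : Prop :=
  forall Y Y', U Y -> U Y' -> Y <> Y' ->
    forall x y, pts Y x -> pts Y' y -> r < dist Y x y.

(* X -R-> Y  (indices i = 1..k, using R_i = R i). *)
Definition arrowR {T} (Rs : nat -> R) (FX FY : mfamily T) : Prop :=
  exists k : nat, forall X, FX X ->
    exists U : nat -> mfamily T,
      (forall i, (1 <= i <= k)%nat -> forall Y, U i Y -> FY Y /\ subspace Y X) /\
      (forall i, (1 <= i <= k)%nat -> rdisjoint (Rs i) (U i)) /\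
      (forall x, pts X x ->
         exists i, (1 <= i <= k)%nat /\ exists Y, U i Y /\ pts Y x).

Definition bounded_family {T} (FX : mfamily T) : Prop :=
  exists D : R, forall X, FX X -> forall x y, pts X x -> pts X y -> dist X x y <= D.

(* The classes C_alpha, for alpha in a well-ordered type (O, lt) of ordinals.
   alpha = 0 means alpha is the least element. *)
Inductive inC {T : Type} {O : Type} (lt : O -> O -> Prop) : O -> mfamily T -> Prop :=
| inC_zero : forall alpha FX,
    (forall b, ~ lt b alpha) -> bounded_family FX -> inC lt alpha FX
| inC_succ : forall alpha FX,
    ~ (forall b, ~ lt b alpha) ->
    (forall Rs : nat -> R, exists beta, lt beta alpha /\
        exists FY : mfamily T, metric_family FY /\ inC lt beta FY /\ arrowR Rs FX FY) ->
    inC lt alpha FX.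

Definition strict_well_order {O : Type} (lt : O -> O -> Prop) : Prop :=
  well_founded lt /\
  (forall a b c, lt a b -> lt b c -> lt a c) /\
  (forall a b, lt a b \/ a = b \/ lt b a).

(* A map of families: a collection of maps f : X_f -> Y_f. *)
Record FMap (T1 T2 : Type) := mkFMap { src : MS T1 ; tgt : MS T2 ; fn : T1 -> T2 }.
Arguments src {T1 T2}.
Arguments tgt {T1 T2}.
Arguments fn {T1 T2}.

Definition map_of_families {T1 T2} (F : FMap T1 T2 -> Prop)
    (FX : mfamily T1) (FY : mfamily T2) : Prop :=
  (forall f, F f -> FX (src f) /\ FY (tgt f) /\
      (forall x, pts (src f) x -> pts (tgt f) (fn f x))) /\
  (forall X, FX X -> exists f, F f /\ src f = X).

Definition nondecreasing0 (rho : R -> R) : Prop :=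
  forall s t, 0 <= s -> s <= t -> rho s <= rho t.

Definition nonneg0 (rho : R -> R) : Prop := forall t, 0 <= t -> 0 <= rho t.

Definition proper0 (rho : R -> R) : Prop :=
  forall M, exists N, forall t, 0 <= t -> rho t <= M -> t <= N.

Definition coarse_embedding {T1 T2} (F : FMap T1 T2 -> Prop) : Prop :=
  exists rho1 rho2 : R -> R,
    nonneg0 rho1 /\ nonneg0 rho2 /\ nondecreasing0 rho1 /\ nondecreasing0 rho2 /\
    proper0 rho1 /\
    forall f, F f -> forall x x', pts (src f) x -> pts (src f) x' ->
      rho1 (dist (src f) x x') <= dist (tgt f) (fn f x) (fn f x') /\
      dist (tgt f) (fn f x) (fn f x') <= rho2 (dist (src f) x x').

(* Main.v *)
Require Import Defs.
From Stdlib Require Import Reals Lra.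
Require Import Defs.
Open Scope R_scope.

Definition pull {T1 T2} (f : FMap T1 T2) (Z : MS T2) : MS T1 :=
  mkMS (fun x => pts (src f) x /\ pts Z (fn f x)) (Defs.dist (src f)).

Lemma metric_sub {T} (X : MS T) (P : T -> Prop) :
  is_metric X -> is_metric (mkMS (fun x => pts X x /\ P x) (Defs.dist X)).
Proof.
  intros [H1 [H2 [H3 H4]]]; unfold is_metric; simpl.
  repeat split; intros.
  - apply H1; tauto.
  - apply H2; tauto. - apply H2; tauto.
  - apply H3; tauto.
  - apply H4; tauto.
Qed.

Lemma main (O : Type) (lt : O -> O -> Prop) (Hwf : well_founded lt)
  (T1 T2 : Type) : forall alpha (FX : mfamily T1) (FY : mfamily T2)
  (F : FMap T1 T2 -> Prop),
  metric_family FX ->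
  map_of_families F FX FY -> coarse_embedding F ->
  inC lt alpha FY -> inC lt alpha FX.
Proof.
  intro alpha; induction alpha as [alpha IH] using (well_founded_ind Hwf).
  intros FX FY F HmX [Hm1 Hm2] HCE HY.
  destruct HCE as [rho1 [rho2 [Hn1 [Hn2 [Hd1 [Hd2 [Hp Hce]]]]]]].
  inversion HY; subst.
  - apply inC_zero; [assumption|].
    destruct H0 as [D HD].
    destruct (Hp D) as [N HN]. exists N.
    intros X HX x y Hx Hy.
    destruct (Hm2 X HX) as [f [Hf Hs]]. subst X.
    destruct (Hm1 f Hf) as [HXf [HYf Hpt]].
    destruct (Hce f Hf x y Hx Hy) as [Ha Hb].
    apply HN.
    + destruct (HmX _ HXf) as [P _]; apply P; auto.
    + eapply Rle_trans; [exact Ha|]. apply HD; auto.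
  - apply inC_succ; [assumption|].
    intros Rs.
    destruct (H0 (fun i => rho2 (Rmax 0 (Rs i)))) as
      [beta [Hlt [FZ [HmZ [HZ [k Hk]]]]]].
    exists beta; split; [assumption|].
    set (FW := fun W : MS T1 => exists f, F f /\ exists Z, FZ Z /\
                 subspace Z (tgt f) /\ W = pull f Z).
    set (F' := fun g : FMap T1 T2 => exists f Z, F f /\ FZ Z /\
                 subspace Z (tgt f) /\ g = mkFMap _ _ (pull f Z) Z (fn f)).
    exists FW; split.
    { intros W [f [Hf [Z [HZz [Hsub ->]]]]].
      apply metric_sub. apply HmX. apply (Hm1 f Hf). }
    split.
    { apply (IH beta Hlt FW FZ F').
      - intros W [f [Hf [Z [HZz [Hsub ->]]]]].
        apply metric_sub. apply HmX. apply (Hm1 f Hf).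
      - split.
        + intros g [f [Z [Hf [HZz [Hsub ->]]]]]; simpl.
          split; [exists f; split; [auto|]; exists Z; auto|].
          split; [auto|]. intros x [_ Hx]; exact Hx.
        + intros W [f [Hf [Z [HZz [Hsub ->]]]]].
          exists (mkFMap _ _ (pull f Z) Z (fn f)); split; [|reflexivity].
          exists f, Z; auto.
      - exists rho1, rho2; do 5 (split; [assumption|]).
        intros g [f [Z [Hf [HZz [[Hd Hsp] ->]]]]] x x' [Hx _] [Hx' _]; simpl.
        rewrite Hd. apply (Hce f Hf); auto.
      - assumption. }
    exists k. intros X HX.
    destruct (Hm2 X HX) as [f [Hf Hs]]. subst X.
    destruct (Hm1 f Hf) as [HXf [HYf Hpt]].
    destruct (Hk (tgt f) HYf) as [U [HU1 [HU2 HU3]]].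
    exists (fun i W => exists Z, U i Z /\ W = pull f Z).
    split; [|split].
    + intros i Hi W [Z [HUZ ->]].
      destruct (HU1 i Hi Z HUZ) as [HZz Hsub].
      split.
      * exists f; split; [auto|]. exists Z; auto.
      * split; [reflexivity|]. intros x [Hx _]; exact Hx.
    + intros i Hi W W' [Z [HUZ ->]] [Z' [HUZ' ->]] Hne x y [Hx Hzx] [Hy Hzy].
      simpl.
      assert (HZne : Z <> Z') by (intro E; apply Hne; subst; reflexivity).
      pose proof (HU2 i Hi Z Z' HUZ HUZ' HZne _ _ Hzx Hzy) as Hr.
      destruct (HU1 i Hi Z HUZ) as [_ [Hd _]].
      rewrite Hd in Hr.
      destruct (Hce f Hf x y Hx Hy) as [_ Hb].
      destruct (Rlt_or_le (Rs i) (Defs.dist (src f) x y)) as [Hl|Hl]; [exact Hl|].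
      exfalso.
      assert (H0d : 0 <= dist (src f) x y)
        by (destruct (HmX _ HXf) as [P _]; apply P; auto).
      assert (rho2 (Defs.dist (src f) x y) <= rho2 (Rmax 0 (Rs i))).
      { apply Hd2; auto. eapply Rle_trans; [exact Hl|apply Rmax_r]. }
      lra.
    + intros x Hx.
      destruct (HU3 (fn f x) (Hpt x Hx)) as [i [Hi [Z [HUZ HZx]]]].
      exists i; split; [auto|].
      exists (pull f Z); split; [exists Z; auto|]. simpl; auto.
Qed.

Theorem theorem3p1 (O : Type) (lt : O -> O -> Prop) (Hwo : strict_well_order lt)
  (alpha : O) (T1 T2 : Type) (FX : mfamily T1) (FY : mfamily T2)
  (F : FMap T1 T2 -> Prop) :
  metric_family FX -> metric_family FY ->
  map_of_families F FX FY -> coarse_embedding F ->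
  inC lt alpha FY -> inC lt alpha FX.
Proof.
  intros HX _ HF HC HY.
  exact (main O lt (proj1 Hwo) T1 T2 alpha FX FY F HX HF HC HY).
Qed.
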